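(* Let $A$ be a real constant and let $g(x)=\dfrac{Ae^{x/2}+e^{-x/2}}{Ae^{x/2}-e^{-x/2}}$ on an open interval where the denominator does not vanish (for $A=1$, $g=\coth(x/2)$; for $A=-1$, $g=\tanh(x/2)$). Then for every integer $i\ge2$, $$\frac i2\,g\,g^{(i-1)}+\sum_{k=0}^{\lfloor (i-1)/2\rfloor}\binom{i}{2k}B_{2k}\,g^{(i-2k)}=0,$$ where $g^{(j)}$ denotes the $j$-th derivative of $g$.
   Context: Bernoulli numbers are defined by $\frac{z}{e^z-1}=\sum_{m\ge0}\frac{B_m}{m!}z^m$ (so $B_0=1$, $B_2=1/6$). *)

(* Defs.v *)
From Stdlib Require Import Reals.
From Coquelicot Require Import Coquelicot.
Open Scope R_scope.

Definition g (A x : R) : R :=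
  (A * exp (x / 2) + exp (- x / 2)) / (A * exp (x / 2) - exp (- x / 2)).

Definition is_bernoulli_seq (B : nat -> R) : Prop :=
  exists r : R, 0 < r /\
    forall z : R, 0 < Rabs z < r ->
      is_pseries (fun m => B m / INR (Factorial.fact m)) z (z / (exp z - 1)).

(* Main.v *)
Require Import Defs.
From Stdlib Require Import Reals Lia Lra.
From Coquelicot Require Import Coquelicot.
Open Scope R_scope.

Lemma Dn_S f n t : Derive_n f (S n) t = Derive_n (Derive f) n t.
Proof. replace (S n) with (n+1)%nat by lia. rewrite <- Derive_n_comp. reflexivity. Qed.

Definition openP (U : R -> Prop) := forall y, U y -> locally y U.
Definition smU (U : R -> Prop) (n : nat) (f : R -> R) :=
  forall k y, (k <= n)%nat -> U y -> ex_derive_n f k y.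

Lemma exdn_S f n y : ex_derive f y -> ex_derive_n (Derive f) n y -> ex_derive_n f (S n) y.
Proof.
  destruct n as [|n]; intros H1 H2. exact H1.
  change (ex_derive (Derive_n f (S n)) y).
  apply (ex_derive_ext (Derive_n (Derive f) n)). intros t; symmetry; apply Dn_S.
  exact H2.
Qed.

Lemma exdn_S_inv f n y : ex_derive_n f (S n) y -> ex_derive_n (Derive f) n y.
Proof.
  destruct n as [|n]; intros H. exact I.
  change (ex_derive (Derive_n (Derive f) n) y).
  apply (ex_derive_ext (Derive_n f (S n))). intros t; apply Dn_S.
  exact H.
Qed.

Lemma smU_mono U n m f : (m <= n)%nat -> smU U n f -> smU U m f.
Proof. intros Hm H k y Hk Hy. apply H; auto; lia. Qed.

Lemma pascal_sum (a b : nat -> R) n :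
  sum_f_R0 (fun j => Binomial.C n j * a (S j) * b (n - j)%nat) n
  + sum_f_R0 (fun j => Binomial.C n j * a j * b (S (n - j))) n
  = sum_f_R0 (fun j => Binomial.C (S n) j * a j * b (S n - j)%nat) (S n).
Proof.
  destruct n as [|n].
  - simpl. rewrite (C_n_n 1), C_n_0, (C_n_0 1). ring.
  - rewrite (decomp_sum (fun j => Binomial.C (S (S n)) j * a j * b (S (S n) - j)%nat) (S (S n))) by lia.
    rewrite (decomp_sum (fun j => Binomial.C (S n) j * a j * b (S (S n - j))) (S n)) by lia.
    simpl pred. rewrite !C_n_0.
    rewrite !tech5.
    rewrite (C_n_n (S (S n))), (C_n_n (S n)).
    replace (sum_f_R0 (fun i => Binomial.C (S (S n)) (S i) * a (S i) * b (S (S n) - S i)%nat) n)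
      with (sum_f_R0 (fun i => Binomial.C (S n) i * a (S i) * b (S n - i)%nat) n
          + sum_f_R0 (fun i => Binomial.C (S n) (S i) * a (S i) * b (S (S n - S i))) n).
    + replace (S (S n) - S (S n))%nat with 0%nat by lia.
      replace (S n - S n)%nat with 0%nat by lia.
      replace (S (S n) - 0)%nat with (S (S n)) by lia.
      replace (S (S n - 0))%nat with (S (S n)) by lia.
      ring.
    + rewrite <- plus_sum. apply sum_eq. intros i Hi.
      rewrite <- (pascal (S n) i) by lia.
      replace (S (S n - S i)) with (S (S n) - S i)%nat by lia.
      replace (S n - i)%nat with (S (S n) - S i)%nat by lia. ring.
Qed.

Lemma leibniz U (HU : openP U) n : forall f h, smU U n f -> smU U n h ->
  forall k y, (k <= n)%nat -> U y ->
  ex_derive_n (fun t => f t * h t) k y /\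
  Derive_n (fun t => f t * h t) k y =
  sum_f_R0 (fun j => Binomial.C k j * Derive_n f j y * Derive_n h (k - j) y) k.
Proof.
  induction n as [|n IH]; intros f h Hf Hh k y Hk Hy.
  - assert (k = 0%nat) by lia; subst. split; [exact I|]. simpl. rewrite C_n_0. ring.
  - destruct (Nat.le_gt_cases k n) as [Hkn|Hkn].
    + apply IH; auto; apply (smU_mono U (S n)); auto.
    + assert (k = S n) by lia; subst k.
      assert (Hf' : smU U n (Derive f)).
      { intros k z Hk' Hz. apply exdn_S_inv. apply Hf; auto; lia. }
      assert (Hh' : smU U n (Derive h)).
      { intros k z Hk' Hz. apply exdn_S_inv. apply Hh; auto; lia. }
      assert (Hfn : smU U n f) by (apply (smU_mono U (S n)); auto).
      assert (Hhn : smU U n h) by (apply (smU_mono U (S n)); auto).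
      assert (Hloc : locally y (fun z => Derive f z * h z + f z * Derive h z
                                         = Derive (fun t => f t * h t) z)).
      { apply (filter_imp U); [|apply HU; auto]. intros z Hz. symmetry.
        apply Derive_mult; [apply (Hf 1%nat z)|apply (Hh 1%nat z)]; auto; lia. }
      assert (HA : locally y (fun z => forall k, (k <= n)%nat ->
                     ex_derive_n (fun t => Derive f t * h t) k z)).
      { apply (filter_imp U); [|apply HU; auto]. intros z Hz k Hk2.
        apply (IH (Derive f) h Hf' Hhn k z Hk2 Hz). }
      assert (HB : locally y (fun z => forall k, (k <= n)%nat ->
                     ex_derive_n (fun t => f t * Derive h t) k z)).
      { apply (filter_imp U); [|apply HU; auto]. intros z Hz k Hk2.
        apply (IH f (Derive h) Hfn Hh' k z Hk2 Hz). }
      split.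
      * apply exdn_S.
        { apply ex_derive_mult; [apply (Hf 1%nat y)|apply (Hh 1%nat y)]; auto; lia. }
        apply (ex_derive_n_ext_loc (fun z => Derive f z * h z + f z * Derive h z)); auto.
        apply (ex_derive_n_plus (fun t => Derive f t * h t) (fun t => f t * Derive h t)); auto.
      * rewrite Dn_S.
        rewrite <- (Derive_n_ext_loc (fun z => Derive f z * h z + f z * Derive h z)) by exact Hloc.
        rewrite (Derive_n_plus (fun t => Derive f t * h t) (fun t => f t * Derive h t)) by auto.
        rewrite (proj2 (IH _ _ Hf' Hhn n y (le_n n) Hy)), (proj2 (IH _ _ Hfn Hh' n y (le_n n) Hy)).
        pose proof (pascal_sum (fun j => Derive_n f j y) (fun j => Derive_n h j y) n) as P.
        cbv beta in P. rewrite <- P.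
        f_equal; apply sum_eq; intros j Hj; rewrite ?Dn_S; reflexivity.
Qed.

Lemma sum_zero (F : nat -> R) n : (forall j, (j <= n)%nat -> F j = 0) -> sum_f_R0 F n = 0.
Proof.
  induction n as [|n IH]; intros H; simpl.
  - apply H; lia.
  - rewrite IH by (intros; apply H; lia). rewrite H by lia. ring.
Qed.

Lemma sum_single (F : nat -> R) m n : (m <= n)%nat -> (forall j, j <> m -> F j = 0) ->
  sum_f_R0 F n = F m.
Proof.
  intros Hm HF. induction n as [|n IH].
  - assert (m = 0%nat) by lia; subst; reflexivity.
  - destruct (Nat.eq_dec m (S n)) as [->|Hne].
    + rewrite tech5. rewrite sum_zero. ring. intros j Hj; apply HF; lia.
    + rewrite tech5. rewrite IH by lia. rewrite (HF (S n)) by auto. ring.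
Qed.

Lemma sum_even (F : nat -> R) m : (forall k, F (S (2*k)) = 0) ->
  sum_f_R0 F (2*m) = sum_f_R0 (fun k => F (2*k)%nat) m.
Proof.
  intros HF. induction m as [|m IH].
  - reflexivity.
  - replace (2 * S m)%nat with (S (S (2*m))) by lia. rewrite !tech5, IH, HF.
    replace (S (S (2*m))) with (2 * S m)%nat by lia. ring.
Qed.

Lemma sum_even2 (F : nat -> R) i : (1 <= i)%nat -> (forall k, F (S (2*k)) = 0) -> F i = 0 ->
  sum_f_R0 F i = sum_f_R0 (fun k => F (2*k)%nat) ((i-1)/2).
Proof.
  intros Hi Hodd Hi0. destruct (Nat.Even_or_Odd i) as [[m Hm]|[m Hm]]; subst i.
  - destruct m as [|m]; [lia|].
    replace (2 * S m)%nat with (S (S (2*m))) in * by lia.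
    rewrite !tech5, Hi0, Hodd, sum_even by auto.
    replace ((S (S (2 * m)) - 1) / 2)%nat with m. ring.
    apply Nat.div_unique with 1%nat; lia.
  - replace (2 * m + 1)%nat with (S (2*m)) in * by lia.
    rewrite tech5, Hodd, sum_even by auto.
    replace ((S (2 * m) - 1) / 2)%nat with m. ring.
    apply Nat.div_unique with 0%nat; lia.
Qed.

Lemma C_n_1 n : (1 <= n)%nat -> Binomial.C n 1 = INR n.
Proof.
  intros Hn. destruct n as [|n]; [lia|]. unfold Binomial.C.
  replace (S n - 1)%nat with n by lia. rewrite fact_simpl, mult_INR. simpl (Factorial.fact 1).
  pose proof (INR_fact_neq_0 n). change (INR 1) with 1. set (u := INR (S n)). field. auto.
Qed.

Lemma ball_R x (e : R) y : ball x e y <-> Rabs (y - x) < e.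
Proof. unfold ball; simpl; unfold AbsRing_ball, abs, minus, plus, opp; simpl. tauto. Qed.

Lemma cont_nz (f : R -> R) y : continuous f y -> f y <> 0 -> locally y (fun z => f z <> 0).
Proof.
  intros Hc Hy. apply (Hc (fun z => z <> 0)).
  assert (Hp : 0 < Rabs (f y)) by (apply Rabs_pos_lt; auto).
  exists (mkposreal _ Hp). intros z Hz. change (Rabs (z - f y) < Rabs (f y)) in Hz.
  intros Hz0. rewrite Hz0 in Hz. rewrite Rminus_0_l, Rabs_Ropp in Hz. lra.
Qed.

Lemma exp_neq1 t : t <> 0 -> exp t <> 1.
Proof. intros Ht H. apply Ht. rewrite <- exp_0 in H. apply exp_inv in H. auto. Qed.

Lemma half_smooth k y : ex_derive_n (fun t => t/2) k y.
Proof.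
  apply (ex_derive_n_ext (fun t => /2 * t ^ 1)). intros; simpl; field.
  apply ex_derive_n_scal_l, ex_derive_n_pow.
Qed.

Lemma half_D1 : Derive_n (fun t => t/2) 1 0 = /2.
Proof.
  rewrite (Derive_n_ext _ (fun t => /2 * t ^ 1)) by (intros; simpl; field).
  rewrite Derive_n_scal_l, Derive_n_pow. simpl. field.
Qed.

Lemma half_Dk k : k <> 1%nat -> Derive_n (fun t => t/2) k 0 = 0.
Proof.
  intros Hk.
  rewrite (Derive_n_ext _ (fun t => /2 * t ^ 1)) by (intros; simpl; field).
  rewrite Derive_n_scal_l, Derive_n_pow.
  destruct k as [|[|k]]; [simpl; ring| lia | simpl; ring].
Qed.

Lemma lim0_bounded (u : nat -> R) : is_lim_seq u 0 -> exists M, forall n, Rabs (u n) <= M.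
Proof.
  intros H. apply is_lim_seq_spec in H.
  destruct (H (mkposreal 1 Rlt_0_1)) as [N HN].
  assert (Hf : forall K, exists M, forall n, (n <= K)%nat -> Rabs (u n) <= M).
  { induction K as [|K [M HM]].
    - exists (Rabs (u 0%nat)). intros n Hn. assert (n = 0%nat) by lia; subst; lra.
    - exists (Rmax M (Rabs (u (S K)))). intros n Hn.
      destruct (Nat.eq_dec n (S K)) as [->|Hne]. apply Rmax_r.
      eapply Rle_trans; [apply HM; lia| apply Rmax_l]. }
  destruct (Hf N) as [M HM]. exists (Rmax M 1). intros n.
  destruct (Nat.le_gt_cases n N) as [Hn|Hn].
  - eapply Rle_trans; [apply HM; auto| apply Rmax_l].
  - eapply Rle_trans; [|apply Rmax_r]. specialize (HN n ltac:(lia)). simpl in HN.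
    rewrite Rminus_0_r in HN. lra.
Qed.

Lemma CV_bound (a : nat -> R) z : ex_pseries a z -> Rbar_le (Rabs z) (CV_radius a).
Proof.
  intros H. destruct (CV_radius_bounded a) as [Hub _]. apply Hub.
  apply ex_pseries_R in H. apply ex_series_lim_0 in H.
  destruct (lim0_bounded _ H) as [M HM]. exists M. intros n.
  replace (Rabs (a n * Rabs z ^ n)) with (Rabs (a n * z ^ n)). apply HM.
  rewrite !Rabs_mult, !RPow_abs, Rabs_Rabsolu. reflexivity.
Qed.

Lemma g_deriv A y : A * exp (y / 2) - exp (- y / 2) <> 0 ->
  is_derive (g A) y (/2 - /2 * (g A y * g A y)).
Proof.
  intros H. unfold g. auto_derive.
  - exact H.
  - unfold Rdiv in *.
    assert (E: exp (- y * /2) = / exp (y * /2)).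
    { rewrite <- exp_Ropp. f_equal. ring. }
    rewrite E in *. assert (exp (y * /2) <> 0) by (apply Rgt_not_eq, exp_pos).
    field. split; auto.
    set (e := exp (y * /2)) in *.
    replace (A * e * e - 1) with ((A * e - / e) * e) by (field; auto).
    apply Rmult_integral_contrapositive_currified; auto.
Qed.

Definition Ug (A y : R) : Prop := A * exp (y / 2) - exp (- y / 2) <> 0.

Lemma UgT_open A c : openP (fun t => Ug A (t + c)).
Proof.
  intros y Hy.
  apply (cont_nz (fun z => A * exp ((z + c) / 2) - exp (- (z + c) / 2)) y); [|exact Hy].
  apply (@ex_derive_continuous R_AbsRing R_NormedModule). auto_derive. exact I.
Qed.

Lemma Ug_open A : openP (Ug A).
Proof.
  intros y Hy.
  apply (cont_nz (fun z => A * exp (z / 2) - exp (- z / 2)) y); [|exact Hy].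
  apply (@ex_derive_continuous R_AbsRing R_NormedModule). auto_derive. exact I.
Qed.

Lemma g_smooth A n : smU (Ug A) n (g A).
Proof.
  induction n as [|n IH].
  - intros k y Hk Hy. assert (k=0%nat) by lia; subst; exact I.
  - intros k y Hk Hy. destruct (Nat.le_gt_cases k n) as [H|H]; [apply IH; auto|].
    assert (k = S n) by lia; subst k.
    apply exdn_S. { eexists; apply g_deriv; exact Hy. }
    apply (ex_derive_n_ext_loc (fun z => /2 - /2 * (g A z * g A z))).
    { apply (filter_imp (Ug A)); [|apply Ug_open; auto]. intros z Hz. symmetry.
      apply is_derive_unique, g_deriv, Hz. }
    apply (ex_derive_n_minus (fun _ => /2) (fun z => /2 * (g A z * g A z))).
    + apply filter_forall. intros; apply ex_derive_n_const.
    + apply (filter_imp (Ug A)); [|apply Ug_open; auto]. intros z Hz k Hk2.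
      apply ex_derive_n_scal_l. apply (leibniz (Ug A) (Ug_open A) n (g A) (g A) IH IH k z Hk2 Hz).
Qed.

Lemma alg A x t : t <> 0 -> Ug A x -> Ug A (t + x) ->
  t/2 * (g A x * g A (t+x)) + (t/(exp t - 1) + t/2) * (g A (t+x) - g A x) = t/2.
Proof.
  intros Ht H1 H2. unfold Ug, g in *.
  assert (E1 : exp ((t + x)/2) = exp (t/2) * exp (x/2)).
  { rewrite <- exp_plus. f_equal. field. }
  assert (E2 : exp (- (t + x)/2) = / (exp (t/2) * exp (x/2))).
  { rewrite <- exp_plus, <- exp_Ropp. f_equal. field. }
  assert (E3 : exp (- x/2) = / exp (x/2)).
  { rewrite <- exp_Ropp. f_equal. field. }
  assert (E4 : exp t = exp (t/2) * exp (t/2)).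
  { rewrite <- exp_plus. f_equal. field. }
  pose proof (exp_neq1 t Ht) as H3.
  rewrite E1, E2, E3 in *. rewrite E4 in *.
  set (a := exp (x/2)) in *. set (s := exp (t/2)) in *.
  assert (a <> 0) by (apply Rgt_not_eq, exp_pos).
  assert (s <> 0) by (apply Rgt_not_eq, exp_pos).
  assert (s * s - 1 <> 0) by (intro; apply H3; lra).
  field. repeat split; auto.
  - replace (A * a * a - 1) with ((A * a - / a) * a) by (field; auto).
    apply Rmult_integral_contrapositive_currified; auto.
  - replace (A * (s * a) * (s * a) - 1) with ((A * (s * a) - / (s * a)) * (s * a)) by (field; auto).
    apply Rmult_integral_contrapositive_currified; auto.
Qed.

Theorem mainTheorem9 (A : R) (B : nat -> R) (HB : is_bernoulli_seq B)
  (i : nat) (Hi : (2 <= i)%nat) (x : R)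
  (Hx : A * exp (x / 2) - exp (- x / 2) <> 0) :
  INR i / 2 * g A x * Derive_n (g A) (i - 1)%nat x
  + sum_f_R0 (fun k => Binomial.C i (2 * k)%nat * B (2 * k)%nat
                        * Derive_n (g A) (i - 2 * k)%nat x) ((i - 1) / 2)%nat
  = 0.
Proof.
  destruct HB as [r [Hr HBs]].
  set (b := fun m => B m / INR (Factorial.fact m)) in *.
  assert (HPb : forall t, 0 < Rabs t < r -> PSeries b t = t / (exp t - 1)).
  { intros t Ht. apply is_pseries_unique. apply HBs; auto. }
  assert (Hcv : forall t, Rabs t < r/2 -> Rbar_lt (Rabs t) (CV_radius b)).
  { intros t Ht. apply Rbar_lt_le_trans with (r/2).
    - simpl. exact Ht.
    - replace (r/2) with (Rabs (r/2)) by (rewrite Rabs_pos_eq; lra).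
      apply CV_bound. eexists. apply HBs. rewrite Rabs_pos_eq; lra. }
  set (V0 := fun t => Rabs t < r/2).
  assert (HV0 : openP V0).
  { intros y Hy. unfold V0 in *. assert (He : 0 < r/2 - Rabs y) by lra.
    exists (mkposreal _ He). intros z Hz. change (Rabs (z - y) < r/2 - Rabs y) in Hz.
    assert (Rabs z <= Rabs (z - y) + Rabs y).
    { replace z with ((z-y)+y) at 1 by ring. apply Rabs_triang. }
    lra. }
  set (eps := fun t => PSeries b t + t / 2).
  assert (Heps : forall n, smU V0 n eps).
  { intros n k y Hk Hy. unfold eps.
    apply (ex_derive_n_plus (PSeries b) (fun t => t/2)).
    - apply (filter_imp V0); [|apply HV0; auto]. intros z Hz j Hj.
      apply ex_derive_n_PSeries, Hcv, Hz.
    - apply filter_forall. intros; apply half_smooth. }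
  assert (Hloc0 : locally 0 V0) by (apply HV0; unfold V0; rewrite Rabs_R0; lra).
  assert (Heven : forall j, (j <> 1)%nat -> Derive_n eps j 0 = B j).
  { intros j Hj. unfold eps.
    rewrite (Derive_n_plus (PSeries b) (fun t => t/2)).
    - rewrite half_Dk by auto. rewrite Derive_n_coef.
      + unfold b. pose proof (INR_fact_neq_0 j). field. auto.
      + pose proof (Hcv 0) as H0. rewrite Rabs_R0 in H0. apply H0. lra.
    - apply (filter_imp V0); [|exact Hloc0]. intros z Hz k Hk.
      apply ex_derive_n_PSeries, Hcv, Hz.
    - apply filter_forall. intros; apply half_smooth. }
  assert (Hsym : locally 0 (fun t => eps (- t) = eps t)).
  { apply (filter_imp V0); [|exact Hloc0]. intros t Ht. unfold eps.
    destruct (Req_dec t 0) as [->|Ht0]. { rewrite Ropp_0; reflexivity. }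
    unfold V0 in Ht.
    assert (Hta : 0 < Rabs t) by (apply Rabs_pos_lt; auto).
    rewrite (HPb t), (HPb (-t)) by (rewrite ?Rabs_Ropp; split; lra).
    rewrite exp_Ropp. pose proof (exp_neq1 t Ht0). pose proof (exp_pos t).
    assert (exp t - 1 <> 0) by (intro; lra).
    field. repeat split; auto; intro; lra. }
  assert (Hodd : forall m, Derive_n eps (S (2*m)) 0 = 0).
  { intros m.
    assert (Hd : Derive_n eps (S (2*m)) 0 = (-1) ^ (S (2*m)) * Derive_n eps (S (2*m)) 0).
    { transitivity (Derive_n (fun t => eps (-t)) (S (2*m)) 0).
      - symmetry; apply Derive_n_ext_loc; exact Hsym.
      - rewrite Derive_n_comp_opp, Ropp_0. reflexivity.
        rewrite Ropp_0. apply (filter_imp V0); [|exact Hloc0]. intros z Hz k Hk.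
        apply (Heps k k z); auto. }
    rewrite pow_1_odd in Hd. lra. }
  set (UG := fun t => Ug A (t + x)).
  assert (HUG : openP UG) by apply UgT_open.
  assert (HG : forall n, smU UG n (fun t => g A (t + x))).
  { intros n k y Hk Hy. apply ex_derive_n_comp_trans. apply (g_smooth A k k); auto. }
  set (W := fun t => V0 t /\ UG t).
  assert (HW : openP W).
  { intros y [H1 H2]. apply filter_and; [apply HV0|apply HUG]; auto. }
  assert (HW0 : W 0).
  { split. unfold V0; rewrite Rabs_R0; lra. unfold UG, Ug. rewrite Rplus_0_l. exact Hx. }
  set (f1 := fun t : R => t / 2). set (h1 := fun t => g A x * g A (t + x)).
  set (G2 := fun t => g A (t + x) - g A x).
  assert (Hf1 : smU W i f1) by (intros k y _ _; apply half_smooth).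
  assert (Hh1 : smU W i h1).
  { intros k y Hk [_ Hy]. apply ex_derive_n_scal_l. apply (HG k k y); auto. }
  assert (He : smU W i eps).
  { intros k y Hk [Hy _]. apply (Heps k k y); auto. }
  assert (HG2 : smU W i G2).
  { intros k y Hk [_ Hy]. unfold G2.
    apply (ex_derive_n_minus (fun t => g A (t + x)) (fun _ => g A x)).
    - apply (filter_imp UG); [|apply HUG; auto]. intros z Hz j Hj. apply (HG j j z); auto.
    - apply filter_forall. intros; apply ex_derive_n_const. }
  pose proof (leibniz W HW i f1 h1 Hf1 Hh1) as L1.
  pose proof (leibniz W HW i eps G2 He HG2) as L2.
  assert (Hpsi : Derive_n (fun t => f1 t * h1 t + eps t * G2 t) i 0 = 0).
  { rewrite (Derive_n_ext_loc _ (fun t => t/2)).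
    - apply half_Dk. lia.
    - apply (filter_imp W); [|apply HW; auto]. intros t [Ht1 Ht2].
      unfold f1, h1, eps, G2. destruct (Req_dec t 0) as [->|Ht0].
      + rewrite Rplus_0_l. field.
      + rewrite HPb. apply alg; auto.
        unfold V0 in Ht1. split; [apply Rabs_pos_lt; auto|lra]. }
  rewrite (Derive_n_plus (fun t => f1 t * h1 t) (fun t => eps t * G2 t)) in Hpsi.
  2: { apply (filter_imp W); [|apply HW; auto]; intros z Hz k Hk; apply (L1 k z Hk Hz). }
  2: { apply (filter_imp W); [|apply HW; auto]; intros z Hz k Hk; apply (L2 k z Hk Hz). }
  rewrite (proj2 (L1 i 0 (le_n i) HW0)), (proj2 (L2 i 0 (le_n i) HW0)) in Hpsi.
  rewrite (sum_single _ 1 i) in Hpsi.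
  2: lia.
  2: { intros j Hj. unfold f1. rewrite half_Dk by auto. ring. }
  unfold f1 in Hpsi. rewrite half_D1, C_n_1 in Hpsi by lia.
  unfold h1 in Hpsi. rewrite Derive_n_scal_l, Derive_n_comp_trans, Rplus_0_l in Hpsi.
  rewrite (sum_even2 _ i) in Hpsi.
  2: lia.
  2: { intros k. rewrite Hodd. ring. }
  2: { rewrite Nat.sub_diag. simpl. unfold G2. rewrite Rplus_0_l. ring. }
  rewrite (sum_eq _ (fun k => Binomial.C i (2*k) * B (2*k)%nat * Derive_n (g A) (i - 2*k) x)) in Hpsi.
  2: { intros k Hk.
       assert (H2k : (2*k <= i - 1)%nat)
         by (pose proof (Nat.mul_div_le (i-1) 2 ltac:(lia)); lia).
       rewrite Heven by lia.
       destruct (i - 2*k)%nat as [|p] eqn:Ep; [lia|].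
       unfold G2. rewrite (Derive_n_minus (fun t => g A (t + x)) (fun _ => g A x)).
       - rewrite Derive_n_const, Derive_n_comp_trans, Rplus_0_l. ring.
       - apply (filter_imp UG); [|apply HUG; apply HW0]. intros z Hz j Hj. apply (HG j j z); auto.
       - apply filter_forall. intros; apply ex_derive_n_const. }
  rewrite <- Hpsi. unfold Rdiv. ring.
Qed.
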